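(* Let $\mathcal{M}=((X,\mathcal{C}),\mathcal{V})$ be a quasi-discrete closure model, $x\in X$, and $\phi_1,\phi_2$ SLCS formulas. Then $\mathcal{M},x\models\phi_1\,\mathcal{S}\,\phi_2$ (path-based semantics) if and only if there exists $A\subseteq X$ with $x\in A$ such that $\mathcal{M},y\models\phi_1$ for all $y\in A$ and $\mathcal{M},z\models\phi_2$ for all $z\in\mathcal{C}(A)\setminus A$.
   Context: A closure space is $(X,\mathcal{C})$ with $\mathcal{C}:\wp(X)\to\wp(X)$, $\mathcal{C}(\emptyset)=\emptyset$, $A\subseteq\mathcal{C}(A)$, $\mathcal{C}(A\cup B)=\mathcal{C}(A)\cup\mathcal{C}(B)$. It is quasi-discrete if there is $R\subseteq X\times X$ with $\mathcal{C}=\mathcal{C}_R$, where $\mathcal{C}_R(A)=A\cup\{x\mid\exists a\in A.(a,x)\in R\}$ (equivalently, $\mathcal{C}(A)=\bigcup_{a\in A}\mathcal{C}(\{a\})$ for all $A$). A function between closure spaces is continuous if $f(\mathcal{C}_1(A))\subseteq\mathcal{C}_2(f(A))$. Paths in a quasi-discrete space are continuous functions $p:(\mathbb{N},\mathcal{C}_\succ)\to(X,\mathcal{C})$ where $\succ=\{(n,n+1)\mid n\in\mathbb{N}\}$. A quasi-discrete closure model is $\mathcal{M}=((X,\mathcal{C}),\mathcal{V})$ with $(X,\mathcal{C})$ quasi-discrete and $\mathcal{V}:AP\to 2^X$. SLCS formulas: $\Phi::=a\mid\top\mid\lnot\Phi\mid\Phi\land\Phi\mid\mathcal{N}\Phi\mid\Phi\,\mathcal{S}\,\Phi\mid\Phi\rightsquigarrow\Phi$,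 with semantics: $x\models a$ iff $x\in\mathcal{V}(a)$; boolean connectives as usual; $x\models\mathcal{N}\phi$ iff $x\in\mathcal{C}(\{y\mid y\models\phi\})$; $x\models\phi_1\,\mathcal{S}\,\phi_2$ iff $x\models\phi_1$ and for every path $p$ with $p(0)=x$ and every $l\in\mathbb{N}$, if $p(l)\models\lnot\phi_1$ then there is $k$ with $0<k\le l$ and $p(k)\models\phi_2$; $x\models\phi_1\rightsquigarrow\phi_2$ iff $x\models\phi_2$ and there exist $y$, a path $p$ and $l$ with $p(0)=y$, $p(l)=x$, $y\models\phi_1$ and $p(i)\models\phi_2$ for all $0<i<l$. *)

(* Defs.v *)
From Stdlib Require Import Classical.

Definition set (X : Type) := X -> Prop.
Definition set_empty {X : Type} : set X := fun _ => False.
Definition set_union {X : Type} (A B : set X) : set X := fun x => A x \/ B x.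
Definition set_sub {X : Type} (A B : set X) : Prop := forall x, A x -> B x.
Definition set_eq {X : Type} (A B : set X) : Prop := forall x, A x <-> B x.
Definition image {X Y : Type} (f : X -> Y) (A : set X) : set Y :=
  fun y => exists x, A x /\ f x = y.

Record closure_space (X : Type) := {
  clos :> set X -> set X;
  clos_empty : set_eq (clos set_empty) set_empty;
  clos_extensive : forall A, set_sub A (clos A);
  clos_union : forall A B, set_eq (clos (set_union A B)) (set_union (clos A) (clos B))
}.
Arguments clos {X} _ _ _.

Definition clos_R {X : Type} (R : X -> X -> Prop) (A : set X) : set X :=
  fun x => A x \/ exists a, A a /\ R a x.

Definition quasi_discrete {X : Type} (CS : closure_space X) : Prop :=
  exists R : X -> X -> Prop, forall A, set_eq (clos CS A) (clos_R R A).

Definition continuous {X Y : Type} (C1 : set X -> set X) (C2 : set Y -> set Y)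
  (f : X -> Y) : Prop :=
  forall A, set_sub (image f (C1 A)) (C2 (image f A)).

Definition succ_rel (m n : nat) : Prop := n = S m.
Definition clos_succ : set nat -> set nat := clos_R succ_rel.

Definition is_path {X : Type} (CS : closure_space X) (p : nat -> X) : Prop :=
  continuous clos_succ (clos CS) p.

Inductive formula (AP : Type) : Type :=
| FAtom : AP -> formula AP
| FTop : formula AP
| FNot : formula AP -> formula AP
| FAnd : formula AP -> formula AP -> formula AP
| FNear : formula AP -> formula AP
| FSurr : formula AP -> formula AP -> formula AP
| FReach : formula AP -> formula AP -> formula AP.
Arguments FAtom {AP} _.
Arguments FTop {AP}.
Arguments FNot {AP} _.
Arguments FAnd {AP} _ _.
Arguments FNear {AP} _.
Arguments FSurr {AP} _ _.
Arguments FReach {AP} _ _.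

Record qd_model (AP X : Type) := {
  m_space : closure_space X;
  m_qd : quasi_discrete m_space;
  m_val : AP -> set X
}.
Arguments m_space {AP X} _.
Arguments m_qd {AP X} _.
Arguments m_val {AP X} _.

Fixpoint sat {AP X : Type} (M : qd_model AP X) (f : formula AP) : set X :=
  match f with
  | FAtom a => m_val M a
  | FTop => fun _ => True
  | FNot g => fun x => ~ sat M g x
  | FAnd g h => fun x => sat M g x /\ sat M h x
  | FNear g => clos (m_space M) (sat M g)
  | FSurr g h => fun x =>
      sat M g x /\
      forall p : nat -> X, is_path (m_space M) p -> p 0 = x ->
        forall l : nat, ~ sat M g (p l) ->
          exists k, 0 < k /\ k <= l /\ sat M h (p k)
  | FReach g h => fun x =>
      sat M h x /\
      exists (y : X) (p : nat -> X) (l : nat),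
        is_path (m_space M) p /\ p 0 = y /\ p l = x /\ sat M g y /\
        forall i, 0 < i -> i < l -> sat M h (p i)
  end.

(* Main.v *)
Require Import Defs.
From Stdlib Require Import Classical Lia PeanoNat.

Lemma path_step {X} (CS : closure_space X) R (HR : forall A, set_eq (clos CS A) (clos_R R A))
  p : is_path CS p -> forall n, p (S n) = p n \/ R (p n) (p (S n)).
Proof.
  intros H n.
  assert (Hc : clos CS (image p (fun m => m = n)) (p (S n))).
  { apply H. exists (S n). split; [|reflexivity]. right. exists n. split; reflexivity. }
  apply HR in Hc. destruct Hc as [[m [Hm E]]|[a [[m [Hm E]] Ha]]]; subst.
  - left; symmetry; exact E.
  - right; exact Ha.
Qed.

Lemma step_path {X} (CS : closure_space X) R (HR : forall A, set_eq (clos CS A) (clos_R R A))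
  p : (forall n, p (S n) = p n \/ R (p n) (p (S n))) -> is_path CS p.
Proof.
  intros H A y [m [Hm E]]; subst. apply HR.
  destruct Hm as [Hm|[a [Ha Hs]]].
  - left. exists m; auto.
  - unfold succ_rel in Hs; subst. destruct (H a) as [E|E].
    + left. exists a. auto.
    + right. exists (p a). split; auto. exists a; auto.
Qed.

Theorem theorem3p7 (AP X : Type) (M : qd_model AP X) (x : X)
  (phi1 phi2 : formula AP) :
  sat M (FSurr phi1 phi2) x <->
  exists A : set X,
    A x /\
    (forall y, A y -> sat M phi1 y) /\
    (forall z, clos (m_space M) A z -> ~ A z -> sat M phi2 z).
Proof.
  destruct (m_qd M) as [R HR].
  split.
  - intros [H1 Hs].
    exists (fun y => exists p l, is_path (m_space M) p /\ p 0 = x /\ p l = y /\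
                      forall k, 0 < k -> k <= l -> ~ sat M phi2 (p k)).
    split; [|split].
    + exists (fun _ => x), 0. repeat split.
      * apply (step_path _ R HR). intros; left; reflexivity.
      * intros k Hk Hk'. lia.
    + intros y [p [l [Hp [H0 [Hl Hk]]]]].
      apply NNPP. intro Hn. subst y.
      destruct (Hs p Hp H0 l Hn) as [k [Ka [Kb Kc]]].
      exact (Hk k Ka Kb Kc).
    + intros z Hz HnA. apply HR in Hz.
      destruct Hz as [Hz|[a [[p [l [Hp [H0 [Hl Hk]]]]] Ha]]]; [contradiction|].
      apply NNPP. intro Hn2. apply HnA.
      exists (fun i => if Nat.leb i l then p i else z), (S l).
      repeat split.
      * apply (step_path _ R HR). intro n.
        destruct (Nat.leb (S n) l) eqn:E1; destruct (Nat.leb n l) eqn:E2.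
        -- apply Nat.leb_le in E1. destruct (path_step _ R HR p Hp n); auto.
        -- apply Nat.leb_le in E1; apply Nat.leb_gt in E2; lia.
        -- apply Nat.leb_gt in E1; apply Nat.leb_le in E2.
           assert (n = l) by lia. subst n a. right; exact Ha.
        -- left; reflexivity.
      * simpl. exact H0.
      * replace (Nat.leb (S l) l) with false by (symmetry; apply Nat.leb_gt; lia).
        reflexivity.
      * intros k Ka Kb. destruct (Nat.leb k l) eqn:E.
        -- apply Nat.leb_le in E. apply Hk; auto.
        -- exact Hn2.
  - intros [A [Ax [HA1 HA2]]].
    split; [apply HA1; exact Ax|].
    intros p Hp H0 l Hn.
    assert (Hl : ~ A (p l)) by (intro HA; apply Hn, HA1, HA).
    assert (G : forall n, (forall m, m <= n -> A (p m)) \/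
               exists j, 0 < j /\ j <= n /\ A (p (j - 1)) /\ ~ A (p j)).
    { induction n as [|n IH].
      - left. intros m Hm. replace m with 0 by lia. rewrite H0; exact Ax.
      - destruct IH as [IH|IH].
        + destruct (classic (A (p (S n)))) as [Ha|Ha].
          * left. intros m Hm. destruct (Nat.eq_dec m (S n)); subst; auto.
            apply IH; lia.
          * right. exists (S n). repeat split; try lia.
            replace (S n - 1) with n by lia. apply IH; lia. exact Ha.
        + right. destruct IH as [j [J1 [J2 J3]]]. exists j. repeat split; try lia; tauto. }
    destruct (G l) as [G1|[j [J1 [J2 [J3 J4]]]]].
    + exfalso. apply Hl, G1; lia.
    + exists j. repeat split; try lia.
      apply HA2; auto. apply HR. right. exists (p (j - 1)). split; auto.
      destruct j as [|j]; [lia|]. replace (S j - 1) with j in * by lia.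
      destruct (path_step _ R HR p Hp j) as [E|E]; auto.
      exfalso. apply J4. rewrite E. exact J3.
Qed.
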